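(* Let $R$ be a commutative ring with unit element, $X$ a set, $F\subseteq R\langle X\rangle$ and $f\in(F)$. Let $Q=(V,E,X,s,t,l)$ be a labelled quiver such that $f$ is compatible with $Q$ and all elements of $F$ are uniformly compatible with $Q$. Then, for every $R$-linear category $\mathcal{C}$ and every representation $\mathcal{R}=(\mathcal{V},\varphi)$ of $Q$ in $\mathcal{C}$ that is consistent with the labelling $l$ and such that every realization of every element of $F$ with respect to $\mathcal{R}$ is zero, every realization of $f$ with respect to $\mathcal{R}$ is zero.
   Context: $R\langle X\rangle$ is the free algebra of noncommutative polynomials over $R$ in indeterminates $X$, with monomials the words in $\langle X\rangle$ (including the empty word $1$); $\operatorname{supp}(f)$ is the set of monomials with nonzero coefficient; $(F)$ is the two-sided ideal generated by $F$. A labelled quiver $Q=(V,E,X,s,t,l)$ has vertices $V$, edges $E$, source/target maps $s,t:E\to V$ and labelling $l:E\to X$. A nonempty path $p=e_n\cdots e_1$ (with $s(e_{i+1})=t(e_i)$) has label $l(e_n)\cdots l(e_1)$, source $s(e_1)$, target $t(e_n)$; each vertex $v$ has an empty path with label $1$ and source and target $v$. For a monomial $m$, $\sigma(m)=\{(s(p),t(p)) : p \text{ a path with } l(p)=m\}$; for a polynomial $f$, $\sigma(f)=\bigcap_{m\in\operatorname{supp}(f)}\sigma(m)$ (so $\sigma(0)=V\times V$). $f$ is compatible with $Q$ if $\sigma(f)\neq\emptyset$, and uniformly compatible if it is compatible and all $m\in\operatorname{supp}(f)$ have the same set $\sigma(m)$. $R\langle X\rangle_{v,w}=\{f : (v,w)\in\sigma(f)\}$.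 A category $\mathcal{C}$ is $R$-linear if every $\operatorname{Hom}_{\mathcal{C}}(A,B)$ is an $R$-module and composition is $R$-bilinear. A representation $(\mathcal{V},\varphi)$ of $Q$ in $\mathcal{C}$ assigns to each vertex $v$ an object $\mathcal{V}_v$ and to each edge $e$ a morphism $\varphi(e)\in\operatorname{Hom}_{\mathcal{C}}(\mathcal{V}_{s(e)},\mathcal{V}_{t(e)})$; it is consistent with $l$ if for any two nonempty paths $e_n\cdots e_1$ and $d_n\cdots d_1$ with the same source and target and equal labels, $\varphi(e_n)\cdots\varphi(e_1)=\varphi(d_n)\cdots\varphi(d_1)$. For a consistent representation and $v,w\in V$, $\varphi_{v,w}:R\langle X\rangle_{v,w}\to\operatorname{Hom}_{\mathcal{C}}(\mathcal{V}_v,\mathcal{V}_w)$ is the $R$-linear map with $\varphi_{v,w}(l(e_n\cdots e_1))=\varphi(e_n)\cdots\varphi(e_1)$ for nonempty paths $e_n\cdots e_1$ from $v$ to $w$, and $\varphi_{v,v}(1)=1_{\mathcal{V}_v}$. For $f\in R\langle X\rangle_{v,w}$, $\varphi_{v,w}(f)$ is called a realization of $f$; the realizations of $f$ are all $\varphi_{v,w}(f)$ with $(v,w)\in\sigma(f)$. *)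

(* Defs.v *)
From HB Require Import structures.
From mathcomp Require Import all_boot all_order all_algebra.
From Stdlib Require Import ClassicalEpsilon.
Set Implicit Arguments. Unset Strict Implicit. Unset Printing Implicit Defensive.
Import GRing.Theory.
Local Open Scope ring_scope.

(* Monomials are words (seq X), the empty word being 1.  A polynomial is a
   coefficient function with finite support; [npsupp] lists the support
   exactly (without repetition). *)
Record ncpoly (R : pzRingType) (X : eqType) := NCPoly {
  npcoef : seq X -> R;
  npsupp : seq (seq X);
  npsupp_uniq : uniq npsupp;
  npsuppP : forall m, (npcoef m != 0) = (m \in npsupp) }.

Definition ncmul (R : pzRingType) (X : eqType) (a b : seq X -> R) : seq X -> R :=
  fun m => \sum_(i < (size m).+1) a (take i m) * b (drop i m).

Inductive in_ideal (R : pzRingType) (X : eqType) (F : ncpoly R X -> Prop)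
  : (seq X -> R) -> Prop :=
| ideal_gen g : F g -> in_ideal F (npcoef g)
| ideal_zero : in_ideal F (fun _ => 0)
| ideal_add a b : in_ideal F a -> in_ideal F b -> in_ideal F (fun m => a m + b m)
| ideal_mull (p : ncpoly R X) a : in_ideal F a -> in_ideal F (ncmul (npcoef p) a)
| ideal_mulr (p : ncpoly R X) a : in_ideal F a -> in_ideal F (ncmul a (npcoef p)).

Record quiver (X : Type) := Quiver {
  qV : Type; qE : Type; qsrc : qE -> qV; qtgt : qE -> qV; qlab : qE -> X }.

(* paths from v to w: pcons e p is the path e p (p followed by e) *)
Inductive qpath (X : Type) (Q : quiver X) : qV Q -> qV Q -> Type :=
| pnil (v : qV Q) : @qpath X Q v v
| pcons (v : qV Q) (e : qE Q) : @qpath X Q v (qsrc e) -> @qpath X Q v (qtgt e).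
Arguments qpath {X} Q _ _.
Arguments pnil {X Q} v.
Arguments pcons {X Q v} e _.

Fixpoint plabel (X : Type) (Q : quiver X) v w (p : qpath Q v w) : seq X :=
  match p with
  | pnil _ => [::]
  | pcons _ e p' => qlab e :: plabel p'
  end.

Definition pnonempty (X : Type) (Q : quiver X) v w (p : qpath Q v w) : bool :=
  if p is pnil _ then false else true.

Definition sigma_mon (X : Type) (Q : quiver X) (m : seq X) (v w : qV Q) : Prop :=
  exists p : qpath Q v w, plabel p = m.
Arguments sigma_mon {X} Q m v w.

(* sigma(f) = intersection over the support (sigma(0) = V x V) *)
Definition sigma_poly (R : pzRingType) (X : eqType) (Q : quiver X)
  (f : ncpoly R X) (v w : qV Q) : Prop :=
  forall m, m \in npsupp f -> sigma_mon Q m v w.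
Arguments sigma_poly {R X} Q f v w.

Definition compatible (R : pzRingType) (X : eqType) (Q : quiver X) (f : ncpoly R X) :=
  exists v w, sigma_poly Q f v w.
Arguments compatible {R X} Q f.

Definition uniformly_compatible (R : pzRingType) (X : eqType) (Q : quiver X)
  (f : ncpoly R X) :=
  compatible Q f /\
  forall m1 m2, m1 \in npsupp f -> m2 \in npsupp f ->
    forall v w, sigma_mon Q m1 v w <-> sigma_mon Q m2 v w.
Arguments uniformly_compatible {R X} Q f.

Record RlinCat (R : pzRingType) := RlinCatMk {
  cOb : Type;
  cHom : cOb -> cOb -> lmodType R;
  cid : forall A, cHom A A;
  ccomp : forall A B C, cHom B C -> cHom A B -> cHom A C;
  ccompA : forall A B C D (h : cHom C D) (g : cHom B C) (f : cHom A B),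
    ccomp h (ccomp g f) = ccomp (ccomp h g) f;
  ccomp1f : forall A B (f : cHom A B), ccomp (cid B) f = f;
  ccompf1 : forall A B (f : cHom A B), ccomp f (cid A) = f;
  ccomp_linl : forall A B C (a : R) (g1 g2 : cHom B C) (f : cHom A B),
    ccomp (a *: g1 + g2) f = a *: ccomp g1 f + ccomp g2 f;
  ccomp_linr : forall A B C (a : R) (g : cHom B C) (f1 f2 : cHom A B),
    ccomp g (a *: f1 + f2) = a *: ccomp g f1 + ccomp g f2 }.
Arguments cHom {R} r _ _ : rename.
Arguments cid {R} r A : rename.
Arguments ccomp {R r A B C} _ _ : rename.

Record representation (R : pzRingType) (X : Type) (Q : quiver X) (C : RlinCat R) :=
  Representation {
  rV : qV Q -> cOb C;
  rphi : forall e : qE Q, cHom C (rV (qsrc e)) (rV (qtgt e)) }.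

Fixpoint pmor (R : pzRingType) (X : Type) (Q : quiver X) (C : RlinCat R)
  (rep : representation Q C) v w (p : qpath Q v w) : cHom C (rV rep v) (rV rep w) :=
  match p in qpath _ v w return cHom C (rV rep v) (rV rep w) with
  | pnil u => cid C (rV rep u)
  | pcons _ e p' => ccomp (rphi rep e) (pmor rep p')
  end.

Definition consistent (R : pzRingType) (X : Type) (Q : quiver X) (C : RlinCat R)
  (rep : representation Q C) : Prop :=
  forall v w (p q : qpath Q v w), pnonempty p -> pnonempty q ->
    plabel p = plabel q -> pmor rep p = pmor rep q.

(* phi_{v,w}(m) for a monomial m with (v,w) in sigma(m): the composite along
   some (chosen) path from v to w labelled m; 0 if there is none (never used
   in that case). *)
Definition word_real (R : pzRingType) (X : Type) (Q : quiver X) (C : RlinCat R)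
  (rep : representation Q C) (v w : qV Q) (m : seq X) : cHom C (rV rep v) (rV rep w) :=
  match excluded_middle_informative (sigma_mon Q m v w) with
  | left H => pmor rep (proj1_sig (constructive_indefinite_description _ H))
  | right _ => 0
  end.

Definition realization (R : pzRingType) (X : eqType) (Q : quiver X) (C : RlinCat R)
  (rep : representation Q C) (f : ncpoly R X) (v w : qV Q) : cHom C (rV rep v) (rV rep w) :=
  \sum_(m <- npsupp f) npcoef f m *: word_real rep v w m.

(* Main.v *)
Require Import Defs.
From mathcomp Require Import all_boot all_order all_algebra.
From Stdlib Require Import Eqdep ClassicalEpsilon.
Set Implicit Arguments. Unset Strict Implicit. Unset Printing Implicit Defensive.
Import GRing.Theory.
Local Open Scope ring_scope.

Fixpoint pcat (X : Type) (Q : quiver X) y w (p : qpath Q y w) v : qpath Q v y -> qpath Q v w :=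
  match p in qpath _ y w return qpath Q v y -> qpath Q v w with
  | pnil _ => fun q => q
  | pcons _ e p' => fun q => pcons e (pcat p' q)
  end.

Lemma plabel_cat (X : Type) (Q : quiver X) y w (p : qpath Q y w) v (q : qpath Q v y) :
  plabel (pcat p q) = plabel p ++ plabel q.
Proof. by elim: p q => //= u e p' IH q; rewrite IH. Qed.

Lemma pmor_cat (R : pzRingType) (X : Type) (Q : quiver X) (C : RlinCat R)
  (rep : representation Q C) y w (p : qpath Q y w) v (q : qpath Q v y) :
  pmor rep (pcat p q) = ccomp (pmor rep p) (pmor rep q).
Proof.
elim: p q => /= [u q|u e p' IH q]; first by rewrite ccomp1f.
by rewrite IH ccompA.
Qed.

Lemma psplit (R : pzRingType) (X : Type) (Q : quiver X) (C : RlinCat R)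
  (rep : representation Q C) v w (p : qpath Q v w) s1 s2 :
  plabel p = s1 ++ s2 -> exists y (p1 : qpath Q y w) (p2 : qpath Q v y),
    [/\ plabel p1 = s1, plabel p2 = s2 & pmor rep p = ccomp (pmor rep p1) (pmor rep p2)].
Proof.
elim: p s1 => [u|u e p' IH] [|x s1] //=.
- move=> H; exists u, (pnil u), (pnil u); rewrite /= ccomp1f; split => //.
- move=> H; exists (qtgt e), (pnil (qtgt e)), (pcons e p'); rewrite /= ccomp1f; split => //.
- case=> Hx Hl; have [y [p1 [p2 [H1 H2 H3]]]] := IH _ Hl.
  exists y, (pcons e p1), p2; rewrite /= H1 Hx H3 ccompA; split => //.
Qed.

Lemma nil_eq (X : Type) (Q : quiver X) v w (q : qpath Q v w) : plabel q = [::] -> v = w.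
Proof. by case: q. Qed.

Lemma nil_pmor (R : pzRingType) (X : Type) (Q : quiver X) (C : RlinCat R)
  (rep : representation Q C) v w (q : qpath Q v w) : plabel q = [::] ->
  forall E : v = w, pmor rep q = eq_rect v (fun z => cHom C (rV rep v) (rV rep z)) (cid C (rV rep v)) w E.
Proof.
case: q => //= u _ E; by rewrite (Eqdep.EqdepTheory.UIP_refl _ _ E).
Qed.

Lemma pmor_label (R : pzRingType) (X : Type) (Q : quiver X) (C : RlinCat R)
  (rep : representation Q C) : consistent rep ->
  forall v w (p q : qpath Q v w), plabel p = plabel q -> pmor rep p = pmor rep q.
Proof.
move=> Hc v w p q E.
case Hp: (plabel p) => [|x s].
- have Hq : plabel q = [::] by rewrite -E.
  have Evw := nil_eq Hp.
  by rewrite (nil_pmor rep Hp Evw) (nil_pmor rep Hq Evw).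
- apply: Hc => //.
  + by move: Hp {E}; case: p.
  + by move: Hp; rewrite E; clear E; case: q.
Qed.

Lemma wrE (R : pzRingType) (X : Type) (Q : quiver X) (C : RlinCat R)
  (rep : representation Q C) : consistent rep ->
  forall v w (p : qpath Q v w), word_real rep v w (plabel p) = pmor rep p.
Proof.
move=> Hc v w p; rewrite /word_real.
case: excluded_middle_informative => [H|H]; last by case: H; exists p.
case: (constructive_indefinite_description _ H) => q /= Hq.
exact: pmor_label.
Qed.

Lemma wr0 (R : pzRingType) (X : Type) (Q : quiver X) (C : RlinCat R)
  (rep : representation Q C) v w m : ~ sigma_mon Q m v w -> word_real rep v w m = 0.
Proof. by move=> H; rewrite /word_real; case: excluded_middle_informative. Qed.
Lemma ccomp0l (R : pzRingType) (C : RlinCat R) A B D (f : cHom C A B) :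
  ccomp (0 : cHom C B D) f = 0.
Proof.
have := ccomp_linl (-1) (0 : cHom C B D) 0 f.
by rewrite scaler0 addr0 scaleN1r addNr.
Qed.

Lemma ccomp0r (R : pzRingType) (C : RlinCat R) A B D (g : cHom C B D) :
  ccomp g (0 : cHom C A B) = 0.
Proof.
have := ccomp_linr (-1) g (0 : cHom C A B) 0.
by rewrite scaler0 addr0 scaleN1r addNr.
Qed.

Lemma ccomp_suml (R : pzRingType) (C : RlinCat R) A B D (I : Type) (s : seq I)
  (c : I -> R) (g : I -> cHom C B D) (f : cHom C A B) :
  ccomp (\sum_(i <- s) c i *: g i) f = \sum_(i <- s) c i *: ccomp (g i) f.
Proof.
elim: s => [|i s IH]; first by rewrite !big_nil ccomp0l.
by rewrite !big_cons ccomp_linl IH.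
Qed.

Lemma ccomp_sumr (R : pzRingType) (C : RlinCat R) A B D (I : Type) (s : seq I)
  (c : I -> R) (g : cHom C B D) (f : I -> cHom C A B) :
  ccomp g (\sum_(i <- s) c i *: f i) = \sum_(i <- s) c i *: ccomp g (f i).
Proof.
elim: s => [|i s IH]; first by rewrite !big_nil ccomp0r.
by rewrite !big_cons ccomp_linr IH.
Qed.



Lemma sum_sub (R : pzRingType) (M : lmodType R) (X : eqType) (c : seq X -> R)
  (G : seq X -> M) s t :
  uniq s -> uniq t -> {subset s <= t} -> (forall m, c m != 0 -> m \in s) ->
  \sum_(m <- t) c m *: G m = \sum_(m <- s) c m *: G m.
Proof.
move=> Us Ut Sst Hc.
rewrite (bigID (fun m => m \in s)) /= [X in _ + X]big1 ?addr0; last first.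
  move=> m Hm; case: (c m =P 0) => [->|/eqP H]; first by rewrite scale0r.
  by rewrite Hc in Hm.
rewrite -big_filter; apply: perm_big; apply: uniq_perm.
- exact: filter_uniq.
- exact: Us.
- move=> m; rewrite mem_filter; case Hm: (m \in s) => //=; exact: Sst.
Qed.

Lemma sum_indep (R : pzRingType) (M : lmodType R) (X : eqType) (c : seq X -> R)
  (G : seq X -> M) s t :
  uniq s -> uniq t -> (forall m, c m != 0 -> m \in s) -> (forall m, c m != 0 -> m \in t) ->
  \sum_(m <- s) c m *: G m = \sum_(m <- t) c m *: G m.
Proof.
move=> Us Ut Hs Ht.
rewrite -(@sum_sub _ _ _ c G s (undup (s ++ t))) ?undup_uniq //; last first.
  by move=> m Hm; rewrite mem_undup mem_cat Hm.
rewrite (@sum_sub _ _ _ c G t (undup (s ++ t))) ?undup_uniq //.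
by move=> m Hm; rewrite mem_undup mem_cat Hm orbT.
Qed.

Lemma sum_pick (M : nmodType) (I : eqType) (s : seq I) (d : I) (F : I -> M) :
  uniq s -> \sum_(y <- s | y == d) F y = if d \in s then F d else 0.
Proof.
move=> Us; case: ifP => Hd.
- rewrite big_mkcond (bigD1_seq d) //= eqxx big1 ?addr0 // => i /negPf ->.
  by [].
- rewrite big1_seq // => i /andP [/eqP -> Hi]; by rewrite Hd in Hi.
Qed.

Lemma prefix_size (X : eqType) (x m : seq X) (i : nat) : (i <= size m)%N -> x = take i m -> size x = i.
Proof. by move=> Hi ->; rewrite size_takel. Qed.

Lemma split_rhs (R : pzRingType) (X : eqType) (p a : seq X -> R) sa m x :
  uniq sa -> (forall y, a y != 0 -> y \in sa) ->
  \sum_(y <- sa) (if m == x ++ y then p x * a y else 0) =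
  if x == take (size x) m then p x * a (drop (size x) m) else 0.
Proof.
move=> Ua Ha; rewrite -big_mkcond /=.
case: ifP => Hx.
- have Em : m = x ++ drop (size x) m by rewrite {1}(eqP Hx) cat_take_drop.
  rewrite (eq_bigl (fun y => y == drop (size x) m)); last first.
    by move=> y /=; rewrite {1}Em eqseq_cat // eqxx /= eq_sym.
  rewrite sum_pick //; case: ifP => // Hd.
  have -> : a (drop (size x) m) = 0 by apply/eqP; apply: contraFT Hd => /Ha.
  by rewrite mulr0.
- rewrite big1 // => y /eqP Em; move: Hx; by rewrite Em take_size_cat ?eqxx.
Qed.

Lemma split_lhs (R : pzRingType) (X : eqType) (p a : seq X -> R) sp m :
  uniq sp -> (forall x, p x != 0 -> x \in sp) ->
  \sum_(i < (size m).+1) p (take i m) * a (drop i m) =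
  \sum_(x <- sp) (if x == take (size x) m then p x * a (drop (size x) m) else 0).
Proof.
move=> Up Hp.
rewrite (eq_bigr (fun i : 'I_(size m).+1 => \sum_(x <- sp | x == take i m) p x * a (drop i m))); last first.
  move=> i _; rewrite sum_pick //; case: ifP => // Hd.
  have -> : p (take i m) = 0 by apply/eqP; apply: contraFT Hd => /Hp.
  by rewrite mul0r.
under eq_bigr do rewrite big_mkcond.
rewrite exchange_big /=; apply: eq_bigr => x _.
rewrite -big_mkcond /=.
case: ifP => Hx.
- have Hs : (size x < (size m).+1)%N.
    by move/eqP: Hx => Hx; rewrite ltnS Hx size_take; case: ifP => // /ltnW.
  rewrite (big_pred1 (Ordinal Hs)) //= => i /=.
  apply/eqP/eqP => [E|->] /=; last exact: (eqP Hx).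
  apply: val_inj => /=; by rewrite E size_takel // -ltnS ltn_ord.
- apply: big1 => i /eqP E; move: Hx.
  have Hi : (i <= size m)%N by rewrite -ltnS ltn_ord.
  by rewrite (prefix_size Hi E) -E eqxx.
Qed.

Lemma ncmul_sum (R : pzRingType) (M : lmodType R) (X : eqType) (G : seq X -> M)
  (p a : seq X -> R) sp sa S :
  uniq sp -> uniq sa -> uniq S -> (forall x, p x != 0 -> x \in sp) ->
  (forall y, a y != 0 -> y \in sa) ->
  (forall x y, x \in sp -> y \in sa -> x ++ y \in S) ->
  \sum_(m <- S) ncmul p a m *: G m = \sum_(x <- sp) \sum_(y <- sa) (p x * a y) *: G (x ++ y).
Proof.
move=> Up Ua US Hp Ha HS.
transitivity (\sum_(x <- sp) \sum_(y <- sa) \sum_(m <- S)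
   (if m == x ++ y then (p x * a y) *: G m else 0)); last first.
  rewrite big_seq_cond [RHS]big_seq_cond; apply: eq_bigr => x /andP [Hx _].
  rewrite big_seq_cond [RHS]big_seq_cond; apply: eq_bigr => y /andP [Hy _].
  by rewrite -big_mkcond sum_pick // HS.
under [RHS]eq_bigr do rewrite exchange_big.
rewrite [RHS]exchange_big; apply: eq_bigr => m _.
rewrite /ncmul (split_lhs a m Up Hp) scaler_suml; apply: eq_bigr => x _.
rewrite -(split_rhs p m x Ua Ha) scaler_suml; apply: eq_bigr => y _.
by case: ifP; rewrite ?scale0r.
Qed.

Lemma gen_zero (R : comPzRingType) (X : eqType) (Q : quiver X) (C : RlinCat R)
  (rep : representation Q C) (g : ncpoly R X) :
  consistent rep -> uniformly_compatible Q g ->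
  (forall v w, sigma_poly Q g v w -> realization rep g v w = 0) ->
  forall v w u t, \sum_(m <- npsupp g) npcoef g m *: word_real rep v w (u ++ m ++ t) = 0.
Proof.
move=> Hc [_ Hunif] Hreal v w u t.
case: (classic (exists m0, m0 \in npsupp g /\ sigma_mon Q (u ++ m0 ++ t) v w)).
- move=> [m0 [Hm0 [p Hp]]].
  have [y [p1 [p23 [H1 H2 _]]]] := psplit rep Hp.
  have [x [p2 [p3 [H3 H4 _]]]] := psplit rep H2.
  have Hsig : sigma_poly Q g x y.
    by move=> m Hm; apply/(Hunif m0 m Hm0 Hm x y); exists p2.
  transitivity (ccomp (pmor rep p1) (ccomp (realization rep g x y) (pmor rep p3)));
    last by rewrite Hreal // ccomp0l ccomp0r.
  rewrite /realization ccomp_suml ccomp_sumr.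
  rewrite big_seq_cond [RHS]big_seq_cond; apply: eq_bigr => m /andP [Hm _].
  congr (_ *: _).
  have [q Hq] := Hsig m Hm.
  rewrite -Hq -H1 -H4 -plabel_cat -plabel_cat !(wrE Hc) !pmor_cat.
  by [].
- move=> Hn; apply: big1_seq => m /andP [_ Hm].
  by rewrite wr0 ?scaler0 // => Hs; apply: Hn; exists m.
Qed.

Lemma ncmul_supp (R : pzRingType) (X : eqType) (p a : seq X -> R) sp sa :
  (forall x, p x != 0 -> x \in sp) -> (forall y, a y != 0 -> y \in sa) ->
  forall m, ncmul p a m != 0 -> m \in undup [seq x ++ y | x <- sp, y <- sa].
Proof.
move=> Hp Ha m; apply: contraR => Hm; apply/eqP; apply: big1 => i _.
case: (p (take i m) =P 0) => [->|/eqP H1]; first by rewrite mul0r.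
case: (a (drop i m) =P 0) => [->|/eqP H2]; first by rewrite mulr0.
case/negP: Hm; rewrite mem_undup -(cat_take_drop i m); apply: allpairs_f; auto.
Qed.

Definition good (R : comPzRingType) (X : eqType) (Q : quiver X) (C : RlinCat R)
  (rep : representation Q C) (a : seq X -> R) :=
  exists s, [/\ uniq s, (forall m, a m != 0 -> m \in s) &
    forall v w u t, \sum_(m <- s) a m *: word_real rep v w (u ++ m ++ t) = 0].

Lemma good_ideal (R : comPzRingType) (X : eqType) (F : ncpoly R X -> Prop)
  (Q : quiver X) (C : RlinCat R) (rep : representation Q C) :
  consistent rep -> (forall g, F g -> uniformly_compatible Q g) ->
  (forall g, F g -> forall v w, sigma_poly Q g v w -> realization rep g v w = 0) ->
  forall a, in_ideal F a -> good rep a.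
Proof.
move=> Hc Hunif Hreal a; elim => {a}.
- move=> g Fg; exists (npsupp g); split.
  + exact: npsupp_uniq.
  + by move=> m; rewrite npsuppP.
  + exact: gen_zero (Hunif _ Fg) (Hreal _ Fg).
- exists [::]; split.
  + by [].
  + by move=> m /=; rewrite eqxx.
  + by move=> v w u t; rewrite big_nil.
- move=> a b _ [sa [Ua Ha Za]] _ [sb [Ub Hb Zb]].
  exists (undup (sa ++ sb)); split.
  + exact: undup_uniq.
  + move=> m Hm; rewrite mem_undup mem_cat; case Ea: (a m == 0).
    * by rewrite Hb ?orbT //; move: Hm; rewrite (eqP Ea) add0r.
    * by rewrite Ha // Ea.
  + move=> v w u t; under eq_bigr do rewrite scalerDl; rewrite big_split /=.
    rewrite (sum_indep _ (undup_uniq _) Ua _ Ha); last first.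
      by move=> m Hm; rewrite mem_undup mem_cat Ha.
    rewrite (sum_indep _ (undup_uniq _) Ub _ Hb); last first.
      by move=> m Hm; rewrite mem_undup mem_cat Hb ?orbT.
    by rewrite Za Zb addr0.
- move=> p a _ [sa [Ua Ha Za]].
  exists (undup [seq x ++ y | x <- npsupp p, y <- sa]); split.
  + exact: undup_uniq.
  + apply: ncmul_supp => // x; by rewrite npsuppP.
  + move=> v w u t.
    rewrite (@ncmul_sum _ _ _ (fun m => word_real rep v w (u ++ m ++ t)) _ _ (npsupp p) sa).
    * apply: big1 => x _.
      under eq_bigr => y _ do rewrite -scalerA -catA catA.
      by rewrite -scaler_sumr Za scaler0.
    * exact: npsupp_uniq.
    * exact: Ua.
    * exact: undup_uniq.
    * by move=> x; rewrite npsuppP.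
    * exact: Ha.
    * by move=> x y Hx Hy; rewrite mem_undup; apply: allpairs_f.
- move=> p a _ [sa [Ua Ha Za]].
  exists (undup [seq x ++ y | x <- sa, y <- npsupp p]); split.
  + exact: undup_uniq.
  + apply: ncmul_supp => // x; by rewrite npsuppP.
  + move=> v w u t.
    rewrite (@ncmul_sum _ _ _ (fun m => word_real rep v w (u ++ m ++ t)) _ _ sa (npsupp p)).
    * rewrite exchange_big; apply: big1 => y _.
      under eq_bigr => x _ do rewrite mulrC -scalerA -catA.
      by rewrite -scaler_sumr Za scaler0.
    * exact: Ua.
    * exact: npsupp_uniq.
    * exact: undup_uniq.
    * exact: Ha.
    * by move=> x; rewrite npsuppP.
    * by move=> x y Hx Hy; rewrite mem_undup; apply: allpairs_f.
Qed.

Theorem theorem5p14 (R : comPzRingType) (X : eqType) (F : ncpoly R X -> Prop)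
  (f : ncpoly R X) (Q : quiver X) :
  in_ideal F (npcoef f) ->
  compatible Q f ->
  (forall g, F g -> uniformly_compatible Q g) ->
  forall (C : RlinCat R) (rep : representation Q C),
    consistent rep ->
    (forall g, F g -> forall v w, sigma_poly Q g v w -> realization rep g v w = 0) ->
    forall v w, sigma_poly Q f v w -> realization rep f v w = 0.
Proof.
move=> Hid _ Hunif C rep Hc Hreal v w _.
have [s [Us Hs Zs]] := good_ideal Hc Hunif Hreal Hid.
rewrite /realization (sum_indep _ (npsupp_uniq f) Us _ Hs); last first.
  by move=> m; rewrite npsuppP.
have := Zs v w [::] [::]; rewrite /=.
by under eq_bigr do rewrite cats0.
Qed.
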